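(* Let $\Gamma$ be a distance-regular graph with diameter $D\ge3$ and valency $k$, which is neither bipartite nor almost bipartite. Let $\theta,\theta'$ be real numbers other than $k$ such that the pair $\theta,\theta'$ is tight. Then $\theta\neq\theta'$.
   Context: $\Gamma$ is a finite connected undirected graph without loops or multiple edges, distance-regular with diameter $D$, intersection numbers $a_i,b_i,c_i$ ($c_0=0$, $b_D=0$), valency $k$, $c_i+a_i+b_i=k$. Bipartite: $a_i=0$ for $0\le i\le D$; almost bipartite: $a_D\ne0$ and $a_i=0$ for $0\le i\le D-1$. For $\theta\in\mathbb{R}$ the pseudo cosine sequence for $\theta$ is the sequence of reals $\sigma_0,\dots,\sigma_D$ with $\sigma_0=1$ and $c_i\sigma_{i-1}+a_i\sigma_i+b_i\sigma_{i+1}=\theta\sigma_i$ for $0\le i\le D-1$. Reals $\theta,\theta'$ form a tight pair if, with $\sigma_i$, $\rho_i$ their pseudo cosine sequences, $(\sigma_i\rho_i)_{i=0}^D$ is a pseudo cosine sequence. *)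

(* Defs.v *)
From HB Require Import structures.
From mathcomp Require Import all_boot all_order all_algebra.
From mathcomp Require Import reals.
Set Implicit Arguments. Unset Strict Implicit. Unset Printing Implicit Defensive.
Import Order.TTheory GRing.Theory Num.Theory.

Section Graph.
Variables (T : finType) (adj : rel T).

Definition simple_graph : Prop :=
  symmetric adj /\ irreflexive adj.

Fixpoint ball (x : T) (n : nat) : {set T} :=
  match n with
  | 0 => [set x]
  | n'.+1 => ball x n' :|: [set z | [exists y in ball x n', adj y z]]
  end.

Definition connected_graph : Prop := forall x y : T, y \in ball x #|T|.

Definition dist (x y : T) : nat := find (fun n => y \in ball x n) (iota 0 #|T|.+1).

Definition diameter : nat := \max_(x : T) \max_(y : T) dist x y.

Definition regular_valency (k : nat) : Prop :=
  forall x : T, #|[set y | adj x y]| = k.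

Definition distance_regular_with (D : nat) (a b c : nat -> nat) : Prop :=
  forall i x y, i <= D -> dist x y = i ->
    [/\ #|[set z | adj y z & (dist x z).+1 == i]| = c i,
        #|[set z | adj y z & dist x z == i]| = a i &
        #|[set z | adj y z & dist x z == i.+1]| = b i].

Definition is_drg (D k : nat) (a b c : nat -> nat) : Prop :=
  [/\ simple_graph, connected_graph, diameter = D, regular_valency k
    & distance_regular_with D a b c].
End Graph.

Definition bipartite_params (D : nat) (a : nat -> nat) : Prop :=
  forall i, i <= D -> a i = 0.

Definition almost_bipartite_params (D : nat) (a : nat -> nat) : Prop :=
  a D <> 0 /\ forall i, i < D -> a i = 0.

Local Open Scope ring_scope.

Definition pseudo_cosine (R : realType) (D : nat) (a b c : nat -> nat)
    (theta : R) (sigma : nat -> R) : Prop :=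
  sigma 0%N = 1 /\
  forall i : nat, (i < D)%N ->
    (c i)%:R * sigma i.-1 + (a i)%:R * sigma i + (b i)%:R * sigma i.+1
      = theta * sigma i.

Definition tight_pair (R : realType) (D : nat) (a b c : nat -> nat)
    (theta theta' : R) : Prop :=
  exists sigma rho : nat -> R,
    [/\ pseudo_cosine D a b c theta sigma,
        pseudo_cosine D a b c theta' rho &
        exists eta : R, pseudo_cosine D a b c eta (fun i => sigma i * rho i)].

(* Main.v *)
Require Import Defs.
From HB Require Import structures.
From mathcomp Require Import all_boot all_order all_algebra.
From mathcomp Require Import reals.
From mathcomp Require Import zify ring lra.
Import Order.TTheory GRing.Theory Num.Theory.

Section G.
Variables (T : finType) (adj : rel T).
Hypothesis conn : connected_graph adj.
Hypothesis symA : symmetric adj.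

Lemma ball_mono x m n : m <= n -> ball adj x m \subset ball adj x n.
Proof.
elim: n => [|n IH]; first by rewrite leqn0 => /eqP ->.
rewrite leq_eqVlt => /orP [/eqP -> //| ]; rewrite ltnS => /IH H.
apply: subset_trans H _; exact: subsetUl.
Qed.

Lemma dist_has x y : has (fun n => y \in ball adj x n) (iota 0 #|T|.+1).
Proof. apply/hasP; exists #|T|. by rewrite mem_iota add0n ltnSn. exact: conn. Qed.

Lemma dist_lt x y : dist adj x y < #|T|.+1.
Proof. by have := dist_has x y; rewrite has_find size_iota. Qed.

Lemma in_ball_dist x y : y \in ball adj x (dist adj x y).
Proof.
have := nth_find 0 (dist_has x y). rewrite nth_iota ?add0n //.
exact: dist_lt.
Qed.

Lemma dist_min x y n : y \in ball adj x n -> dist adj x y <= n.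
Proof.
move=> H; case: (leqP n #|T|) => Hn.
  rewrite leqNgt; apply/negP => Hlt.
  have := before_find 0 Hlt; rewrite nth_iota ?add0n ?H //; lia.
have := dist_lt x y; lia.
Qed.

Lemma mem_ball x y n : (y \in ball adj x n) = (dist adj x y <= n).
Proof.
apply/idP/idP; first exact: dist_min.
move=> H; exact: (subsetP (ball_mono x _ _ H) _ (in_ball_dist x y)).
Qed.

Lemma dist_adj x y z : adj y z -> dist adj x z <= (dist adj x y).+1.
Proof.
move=> Hyz; apply: dist_min => /=; apply/setUP; right; rewrite inE.
apply/existsP; exists y; by rewrite in_ball_dist Hyz.
Qed.

Lemma dist0 x y : (dist adj x y == 0) = (y == x).
Proof. by rewrite -leqn0 -mem_ball /= inE. Qed.

Lemma dist_pred x y n : dist adj x y = n.+1 -> exists w, adj w y /\ dist adj x w = n.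
Proof.
move=> Hd; have := in_ball_dist x y; rewrite Hd /= => /setUP [].
  by rewrite mem_ball Hd ltnn.
rewrite inE => /existsP [w /andP [Hw Hwy]]; exists w; split => //.
rewrite mem_ball in Hw; have := @dist_adj x _ _ Hwy; lia.
Qed.

Lemma dist_down x : forall n y, dist adj x y = n -> forall i, i <= n -> exists w, dist adj x w = i.
Proof.
elim=> [|n IH] y Hy i Hi; first by exists y; lia.
case: (eqVneq i n.+1) => [->|ne]; first by exists y.
have [w [_ Hw]] := @dist_pred x y n Hy; apply: (IH w Hw); lia.
Qed.

Lemma card_pred (P : pred T) : #|[set z | P z]| = \sum_z (P z : nat).
Proof.
rewrite -sum1_card big_mkcond /=; apply: eq_bigr => z _; rewrite inE; by case: (P z).
Qed.

End G.

Lemma drg_facts (T : finType) (adj : rel T) D k a b c :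
  is_drg adj D k a b c -> (1 <= D)%N ->
  [/\ c 0 = 0, a 0 = 0,
      (forall i, i < D -> c i + a i + b i = k /\ 0 < b i)
    & (forall i, 1 <= i -> i < D -> 0 < c i)].
Proof.
case=> [[symA irrA] conn diam reg drw] D1.
have [x0 [y0 Hxy0]] : exists x y, dist adj x y = D.
  have cT : 0 < #|T|.
    rewrite lt0n; apply/negP => /eqP /card0_eq H0.
    move: diam; rewrite /diameter big_pred0 => [|z]; last by have := H0 z; rewrite !inE.
    lia.
  have [x Hx] := bigop.eq_bigmax (fun x => \max_(y : T) dist adj x y) cT.
  have [y Hy] := bigop.eq_bigmax (fun y => dist adj x y) cT.
  exists x, y; by rewrite -Hy -Hx.
have ex : forall i, i <= D -> exists x y, dist adj x y = i.
  move=> i Hi; have [w Hw] := @dist_down T adj conn x0 D y0 Hxy0 i Hi; by exists x0, w.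
have dx : dist adj x0 x0 = 0 by apply/eqP; rewrite (@dist0 T adj conn).
have [Hc0 Ha0 _] := drw 0 x0 x0 (leq0n _) dx.
split.
- rewrite -Hc0. apply/eqP. rewrite cards_eq0. apply/eqP/setP => z. by rewrite !inE andbF.
- rewrite -Ha0. apply/eqP. rewrite cards_eq0. apply/eqP/setP => z. rewrite !inE (@dist0 T adj conn).
  by case: (eqVneq z x0) => [->|]; [rewrite irrA | rewrite andbF].
- move=> i Hi; split.
    have [x [y Hxy]] := ex i (ltnW Hi).
    have [<- <- <-] := drw i x y (ltnW Hi) Hxy.
    rewrite -(reg y) !card_pred -!big_split /=; apply: eq_bigr => z _.
    case Hyz: (adj y z) => //=.
    have h1 := @dist_adj T adj conn x _ _ Hyz; have h2 := @dist_adj T adj conn x _ _ (etrans (symA z y) Hyz).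
    rewrite Hxy in h1 h2.
    move: (dist adj x z) h1 h2 => d h1 h2.
    case: (eqVneq d.+1 i) => [e|n1]; case: (eqVneq d i) => [e2|n2];
      case: (eqVneq d i.+1) => [e3|n3] //=; lia.
  have [x [w Hxw]] := ex i.+1 Hi.
  have [y [Hyw Hy]] := @dist_pred T adj conn _ _ _ Hxw.
  have [_ _ <-] := drw i x y (ltnW Hi) Hy.
  apply/card_gt0P; exists w; by rewrite inE Hyw Hxw eqxx.
- move=> i H1 Hi; have [x [w Hxw]] := ex i (ltnW Hi).
  case: i H1 Hi Hxw => // i _ Hi Hxw.
  have [y [Hyw Hy]] := @dist_pred T adj conn _ _ _ Hxw.
  have [<- _ _] := drw i.+1 x w (ltnW Hi) Hxw.
  apply/card_gt0P; exists y; by rewrite inE symA Hyw Hy eqxx.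
Qed.
Local Open Scope ring_scope.

Lemma alg_part (R : realType) (D k : nat) (a b c : nat -> nat) (theta eta : R)
  (sigma rho : nat -> R) :
  c 0%N = 0%N -> a 0%N = 0%N ->
  (forall i, (i < D)%N -> (c i + a i + b i = k)%N /\ (0 < b i)%N) ->
  (forall i, (1 <= i)%N -> (i < D)%N -> (0 < c i)%N) ->
  (exists i, (i < D)%N /\ a i <> 0%N) ->
  theta <> k%:R ->
  pseudo_cosine D a b c theta sigma -> pseudo_cosine D a b c theta rho ->
  pseudo_cosine D a b c eta (fun i => sigma i * rho i) -> False.
Proof.
move=> c0 a0 Hab Hc [i0 [Hi0 Ha]] Htk [s0 Hs] [r0 Hr] [_ Ht].
have bpos i : (i < D)%N -> (b i)%:R != 0 :> R.
  by move=> Hi; rewrite pnatr_eq0 -lt0n; case: (Hab i Hi).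
have srho : forall i, (i <= D)%N -> sigma i = rho i /\ sigma i.-1 = rho i.-1.
  elim=> [|i IH] Hi; first by rewrite /= s0 r0.
  have [e1 e2] := IH (ltnW Hi); split; last by [].
  have := Hs i Hi; have := Hr i Hi; rewrite -e1 -e2 => h1 h2.
  apply: (mulfI (bpos i Hi)); lra.
have Ht2 : forall i, (i < D)%N ->
   (c i)%:R * sigma i.-1 ^+ 2 + (a i)%:R * sigma i ^+ 2 + (b i)%:R * sigma i.+1 ^+ 2
      = eta * sigma i ^+ 2.
  move=> i Hi; have := Ht i Hi.
  have [e1 e2] := srho i (ltnW Hi); have [e3 _] := srho i.+1 Hi.
  by rewrite -e1 -e2 -e3 !expr2.
have D0 : (0 < D)%N by lia.
have [k0' b0] := Hab 0%N D0.
have k0 : b 0%N = k by lia.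
have th : theta = k%:R * sigma 1%N.
  have := Hs 0%N D0; rewrite c0 a0 k0 s0 /=; lra.
have et : eta = k%:R * sigma 1%N ^+ 2.
  have := Ht2 0%N D0; rewrite c0 a0 k0 s0 /=; lra.
set x := sigma 1%N in th et.
have i1 : (1 <= i0)%N by case: i0 Hi0 Ha => //; rewrite a0.
have [kabc _] := Hab i0 Hi0.
have hk : k%:R = (c i0)%:R + (a i0)%:R + (b i0)%:R :> R by rewrite -kabc !natrD.
have F1 := Hs i0 Hi0; have F2 := Ht2 i0 Hi0.
rewrite th hk in F1; rewrite et hk in F2.
move: F1 F2.
set p := sigma i0.-1; set q := sigma i0; set r := sigma i0.+1.
set A := (a i0)%:R; set B := (b i0)%:R; set C := (c i0)%:R.
move=> F1 F2.
have HG : A * (C * (p - q) ^+ 2 + B * (q - r) ^+ 2) + B * C * (p - r) ^+ 2 = 0.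
  set f1 := C * p + A * q + B * r - (C + A + B) * x * q.
  set f2 := C * p ^+ 2 + A * q ^+ 2 + B * r ^+ 2 - (C + A + B) * x ^+ 2 * q ^+ 2.
  have ef1 : f1 = 0 by rewrite /f1 F1 subrr.
  have ef2 : f2 = 0 by rewrite /f2 F2 subrr.
  have -> : A * (C * (p - q) ^+ 2 + B * (q - r) ^+ 2) + B * C * (p - r) ^+ 2
     = (C + A + B) * f2 - 2 * (C + A + B) * q * f1
       - 2 * f1 * (C * (p - q) + B * (r - q)) + f1 ^+ 2.
    rewrite /f1 /f2; ring.
  by rewrite ef1 ef2 expr0n /= !(mulr0, mul0r) !subr0 addr0.
have Ap : 0 < A by rewrite ltr0n lt0n; apply/eqP.
have Bp : 0 < B by rewrite ltr0n; case: (Hab i0 Hi0).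
have Cp : 0 < C by rewrite ltr0n; exact: Hc.
have nn1 : 0 <= A * (C * (p - q) ^+ 2 + B * (q - r) ^+ 2).
  apply: mulr_ge0; first exact: ltW.
  by apply: addr_ge0; apply: mulr_ge0; rewrite ?sqr_ge0 ?(ltW Bp) ?(ltW Cp).
have nn2 : 0 <= B * C * (p - r) ^+ 2.
  by apply: mulr_ge0; rewrite ?sqr_ge0 // mulr_ge0 ?(ltW Bp) ?(ltW Cp).
have nn3 : 0 <= C * (p - q) ^+ 2 by rewrite mulr_ge0 ?sqr_ge0 ?(ltW Cp).
have nn4 : 0 <= B * (q - r) ^+ 2 by rewrite mulr_ge0 ?sqr_ge0 ?(ltW Bp).
move/eqP: HG; rewrite paddr_eq0 // => /andP [/eqP H1 _].
move/eqP: H1; rewrite mulf_eq0 (gt_eqF Ap) /= paddr_eq0 //.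
rewrite !mulf_eq0 (gt_eqF Bp) (gt_eqF Cp) /= !orbb !subr_eq0 => /andP [/eqP pq /eqP qr].
have q0 : q = 0.
  move: F1; rewrite pq -qr => F1.
  have : (k%:R - theta) * q = 0 by rewrite th hk mulrBl -F1; ring.
  by move/eqP; rewrite mulf_eq0 subr_eq0 => /orP [/eqP /esym|/eqP].
have p0 : p = 0 by rewrite pq.
have down : forall m, (m < i0)%N -> sigma (i0 - m)%N = 0 /\ sigma (i0 - m).-1 = 0.
  elim=> [|m IH] Hm; first by rewrite subn0.
  have [h1 h2] := IH (ltnW Hm).
  set j := (i0 - m.+1)%N.
  have ej : (i0 - m)%N = j.+1 by rewrite /j; lia.
  rewrite ej /= in h1 h2.
  have jD : (j < D)%N by rewrite /j; lia.
  have j1 : (1 <= j)%N by rewrite /j; lia.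
  split => //.
  have := Hs j jD; rewrite h1 h2 !mulr0 addr0 => /eqP.
  rewrite addr0 mulf_eq0 pnatr_eq0 eqn0Ngt (Hc j j1 jD) /= => /eqP //.
have [h1 h2] := down (i0.-1) ltac:(lia).
have e1 : (i0 - i0.-1)%N = 1%N by lia.
rewrite e1 /= in h2.
by move: s0; rewrite h2 => /esym /eqP; rewrite oner_eq0.
Qed.

Theorem lemma6p1 (T : finType) (adj : rel T) (D k : nat) (a b c : nat -> nat)
    (R : realType) (theta theta' : R) :
  is_drg adj D k a b c ->
  (3 <= D)%N ->
  ~ bipartite_params D a ->
  ~ almost_bipartite_params D a ->
  theta <> k%:R -> theta' <> k%:R ->
  tight_pair D a b c theta theta' ->
  theta <> theta'.
Proof.
move=> Hdrg HD Hnb Hnab Ht Ht' [s [r [Ps Pr [eta Pt]]]] Heq.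
rewrite -Heq in Pr.
have [c0 a0 Hab Hc] := @drg_facts T adj D k a b c Hdrg (leq_trans (isT : (1 <= 3)%N) HD).
have Hex : exists i, (i < D)%N /\ a i <> 0%N.
  case: (boolP [exists i : 'I_D, a i != 0%N]) => [/existsP [i Hi]|/existsPn H].
    by exists i; split => //; apply/eqP.
  have H' : forall i, (i < D)%N -> a i = 0%N.
    by move=> i Hi; have := H (Ordinal Hi); rewrite negbK => /eqP.
  case: (eqVneq (a D) 0%N) => [HaD|HaD].
    by exfalso; apply: Hnb => i; rewrite leq_eqVlt => /orP [/eqP ->|/H'].
  by exfalso; apply: Hnab; split; [apply/eqP|].
exact: (@alg_part R D k a b c theta eta s r c0 a0 Hab Hc Hex Ht Ps Pr Pt).
Qed.
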